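(* Let $\mathcal H$ be a regular hypergraph, $L=L_K(\mathcal H)$ and $E$ its underlying graph. The category $\mathfrak M_L$ of unital right $L$-modules is equivalent to the full subcategory of the category of quiver representations of $E$ consisting of those representations $\rho$ satisfying condition (H): for every $h\in\mathcal H^1$, the linear map $[\rho(h)]:\bigoplus_{i\in I_h}\rho(s(h)_i)\to\bigoplus_{j\in J_h}\rho(r(h)_j)$, $(x_i)_{i\in I_h}\mapsto\big(\sum_{i\in I_h}\rho(h_{ij})(x_i)\big)_{j\in J_h}$, is an isomorphism. Under this equivalence a module $M$ corresponds to the representation $\rho_M(v)=Mv$, $\rho_M(e)(m)=me$.
   Context: $K$ is a field. A hypergraph $\mathcal H=(\mathcal H^0,\mathcal H^1,s,r)$: vertex set $\mathcal H^0$, hyperedge set $\mathcal H^1$, and for each $h$ nonempty index sets $I_h,J_h$ with families $s(h)=(s(h)_i)_{i\in I_h}$, $r(h)=(r(h)_j)_{j\in J_h}$ of vertices; regular means all $I_h,J_h$ finite. $L_K(\mathcal H)$ is the $K$-algebra generated by $\{v,h_{ij},h_{ij}^*\}$ ($v\in\mathcal H^0$, $h\in\mathcal H^1$, $i\in I_h$, $j\in J_h$) subject to $uv=\delta_{u,v}u$; $s(h)_ih_{ij}=h_{ij}=h_{ij}r(h)_j$, $r(h)_jh_{ij}^*=h_{ij}^*=h_{ij}^*s(h)_i$; $\sum_{j}h_{ij}h_{kj}^*=\delta_{ik}s(h)_i$; $\sum_{i}h_{ij}^*h_{ik}=\delta_{jk}r(h)_j$. The underlying graph $E$ has $E^0=\mathcal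 H^0$, $E^1=\{h_{ij}\}$, $s(h_{ij})=s(h)_i$, $r(h_{ij})=r(h)_j$. A right $L$-module $M$ is unital if $M=\sum_{v\in\mathcal H^0}Mv$. A quiver representation $\rho$ of $E$ assigns a $K$-vector space $\rho(v)$ to each vertex and a linear map $\rho(e):\rho(s(e))\to\rho(r(e))$ to each edge; morphisms are families of linear maps $\phi_v:\rho(v)\to\rho'(v)$ with $\phi_{r(e)}\circ\rho(e)=\rho'(e)\circ\phi_{s(e)}$. *)

(* Defs.v *)
From HB Require Import structures.
From mathcomp Require Import all_boot all_order all_algebra.
Set Implicit Arguments. Unset Strict Implicit. Unset Printing Implicit Defensive.
Import GRing.Theory.
Local Open Scope ring_scope.

(* For an idempotent f = ( _ * v) this is exactly the corner  M v.            *)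

Definition fixpred (K : fieldType) (M : lmodType K) (f : {linear M -> M}) : {pred M} :=
  [pred x | f x == x].

Lemma fixpred_submod (K : fieldType) (M : lmodType K) (f : {linear M -> M}) :
  GRing.submod_closed (fixpred f).
Proof.
split; first by rewrite inE linear0.
move=> a u v; rewrite !inE => /eqP fu /eqP fv.
by rewrite linearP fu fv.
Qed.

HB.instance Definition _ (K : fieldType) (M : lmodType K) (f : {linear M -> M}) :=
  GRing.isSubmodClosed.Build K M (fixpred f) (fixpred_submod f).

Definition fixsp (K : fieldType) (M : lmodType K) (f : {linear M -> M}) :=
  {x : M | x \in fixpred f}.

HB.instance Definition _ (K : fieldType) (M : lmodType K) (f : {linear M -> M}) :=
  [isSub for (@sval M (fun x => x \in fixpred f)) : fixsp f -> M].
HB.instance Definition _ (K : fieldType) (M : lmodType K) (f : {linear M -> M}) :=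
  [Choice of fixsp f by <:].
HB.instance Definition _ (K : fieldType) (M : lmodType K) (f : {linear M -> M}) :=
  [SubChoice_isSubLmodule of fixsp f by <:].

Section Hypergraph.

(* A hypergraph: vertex set V, hyperedge set HE; for each hyperedge h the     *)
(* index sets I h, J h (finite types: the hypergraph is regular) and the      *)
(* families s(h) = (s h i)_{i in I h}, r(h) = (r h j)_{j in J h}.             *)
Variables (K : fieldType) (V HE : Type) (I J : HE -> finType)
  (s : forall h, I h -> V) (r : forall h, J h -> V).

Record Edge := mkEdge { eh : HE; ei : I eh; ej : J eh }.
Definition src (e : Edge) : V := s (ei e).
Definition tgt (e : Edge) : V := r (ej e).

(* A right L_K(H)-module, L_K(H) being presented by generators and relations:*)
(* a K-vector space with K-linear right actions of the generators v, h_ij,   *)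
(* h_ij^* satisfying the defining relations (m (ab) = (m a) b), and unital    *)
(* in the sense M = sum_v M v.                                                *)
Record RMod := {
  mc :> lmodType K;
  actV : V -> {linear mc -> mc};
  actE : forall h (i : I h) (j : J h), {linear mc -> mc};
  actEs : forall h (i : I h) (j : J h), {linear mc -> mc};
  (* u v = delta_{u,v} u *)
  rel_VV : forall u m, actV u (actV u m) = actV u m;
  rel_VV0 : forall u v m, u <> v -> actV v (actV u m) = 0;
  (* s(h)_i h_ij = h_ij = h_ij r(h)_j *)
  rel_sE : forall h (i : I h) (j : J h) m, actE i j (actV (s i) m) = actE i j m;
  rel_Er : forall h (i : I h) (j : J h) m, actV (r j) (actE i j m) = actE i j m;
  (* r(h)_j h_ij^* = h_ij^* = h_ij^* s(h)_i *)
  rel_rEs : forall h (i : I h) (j : J h) m, actEs i j (actV (r j) m) = actEs i j m;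
  rel_Ess : forall h (i : I h) (j : J h) m, actV (s i) (actEs i j m) = actEs i j m;
  (* sum_j h_ij h_kj^* = delta_{i,k} s(h)_i *)
  rel_CK1 : forall h (i k : I h) m,
    \sum_(j : J h) actEs k j (actE i j m) = if i == k then actV (s i) m else 0;
  (* sum_i h_ij^* h_ik = delta_{j,k} r(h)_j *)
  rel_CK2 : forall h (j k : J h) m,
    \sum_(i : I h) actE i k (actEs i j m) = if j == k then actV (r j) m else 0;
  unital : forall m : mc, exists t : seq (V * mc), m = \sum_(p <- t) actV p.1 p.2
}.

Record RHom (M N : RMod) := {
  hf :> M -> N;
  hf_lin : linear hf;
  hf_V : forall v m, hf (actV M v m) = actV N v (hf m);
  hf_E : forall h (i : I h) (j : J h) m, hf (actE M i j m) = actE N i j (hf m);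
  hf_Es : forall h (i : I h) (j : J h) m, hf (actEs M i j m) = actEs N i j (hf m)
}.

Unset Implicit Arguments.

Record QRep := {
  rc : V -> lmodType K;
  rmap : forall e : Edge, rc (src e) -> rc (tgt e);
  rmap_lin : forall e, linear (rmap e)
}.

Record RepHom (rho rho' : QRep) := {
  phi :> forall v, rc rho v -> rc rho' v;
  phi_lin : forall v, linear (phi v);
  phi_comm : forall (e : Edge) (x : rc rho (src e)),
    phi (tgt e) (rmap rho e x) = rmap rho' e (phi (src e) x)
}.

Definition Hmap (rho : QRep) (h : HE)
  (x : forall i : I h, rc rho (s i)) : forall j : J h, rc rho (r j) :=
  fun j => (\sum_(i : I h) (rmap rho (mkEdge i j) (x i) : rc rho (r j)) : rc rho (r j)).

Definition condH (rho : QRep) : Prop := forall h : HE, bijective (Hmap rho h).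

Lemma corner_edge_proof (M : RMod) (e : Edge) (x : fixsp (actV M (src e))) :
  actE M (ei e) (ej e) (val x) \in fixpred (actV M (tgt e)).
Proof. by rewrite inE /tgt rel_Er. Qed.

Definition repOf_map (M : RMod) (e : Edge) (x : fixsp (actV M (src e))) :
  fixsp (actV M (tgt e)) :=
  exist _ (actE M (ei e) (ej e) (val x)) (corner_edge_proof M e x).

Lemma repOf_map_lin (M : RMod) (e : Edge) : linear (@repOf_map M e).
Proof. by move=> a x y; apply: val_inj; rewrite /= !linearP. Qed.

Definition repOf (M : RMod) : QRep :=
  {| rc := fun v => fixsp (actV M v);
     rmap := @repOf_map M;
     rmap_lin := @repOf_map_lin M |}.

Lemma corner_hom_proof (M N : RMod) (f : RHom M N) (v : V) (x : fixsp (actV M v)) :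
  f (val x) \in fixpred (actV N v).
Proof. by rewrite inE -hf_V; case: x => x /=; rewrite inE => /eqP ->. Qed.

Definition Fmor (M N : RMod) (f : RHom M N) (v : V) (x : fixsp (actV M v)) :
  fixsp (actV N v) := exist _ (f (val x)) (corner_hom_proof M N f v x).

End Hypergraph.

Arguments QRep K {V HE I J} s r.
Arguments rc {K V HE I J s r} _ _.
Arguments rmap {K V HE I J s r} _ _ _.
Arguments RepHom {K V HE I J s r} rho rho'.
Arguments phi {K V HE I J s r rho rho'} _ _ _.
Arguments Hmap {K V HE I J s r} rho h x _.
Arguments condH {K V HE I J s r} rho.
Arguments repOf {K V HE I J s r} M.
Arguments Fmor {K V HE I J s r M N} f v x.
Set Implicit Arguments.

(* Main.v *)
Require Import Defs.
From HB Require Import structures.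
From mathcomp Require Import all_boot all_order all_algebra.
From mathcomp Require Import boolp.
Set Implicit Arguments. Unset Strict Implicit. Unset Printing Implicit Defensive.
Import GRing.Theory.
Local Open Scope ring_scope.

Section Lin.
Variables (K : fieldType) (U W : lmodType K) (f : U -> W) (fl : linear f).
Lemma lin0 : f 0 = 0.
Proof. by have := fl (-1) 0 0; rewrite scaler0 addr0 scaleN1r addNr. Qed.
Lemma linD x y : f (x + y) = f x + f y.
Proof. by have := fl 1 x y; rewrite !scale1r. Qed.
Lemma linZ a x : f (a *: x) = a *: f x.
Proof. by have := fl a x 0; rewrite addr0 lin0 addr0. Qed.
Lemma lin_sum (T : Type) (t : seq T) (F : T -> U) :
  f (\sum_(p <- t) F p) = \sum_(p <- t) f (F p).
Proof.
elim: t => [|a t IH]; first by rewrite !big_nil lin0.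
by rewrite !big_cons linD IH.
Qed.
End Lin.

Lemma fix_val (K : fieldType) (M : lmodType K) (f : {linear M -> M}) (x : fixsp f) : f (val x) = val x.
Proof. by case: x => x /=; rewrite inE => /eqP. Qed.

Section P2.
Variables (K : fieldType) (V HE : Type) (I J : HE -> finType)
  (s : forall h, I h -> V) (r : forall h, J h -> V).

Definition corner (M : RMod K s r) (v : V) (m : M) : fixsp (actV M v) :=
  exist (fun z => z \in fixpred (actV M v)) (actV M v m)
    (introT eqP (@rel_VV _ _ _ _ _ _ _ M v m)).

Lemma corner_lin (M : RMod K s r) v : linear (@corner M v).
Proof. by move=> a x y; apply: val_inj; rewrite /= linearP. Qed.

Lemma cornerK (M : RMod K s r) v (x : fixsp (actV M v)) : corner v (val x) = x.
Proof. by apply: val_inj; rewrite /= fix_val. Qed.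

Lemma part2 (M N : RMod K s r) (f g : RHom M N) :
  (forall v x, Fmor f v x = Fmor g v x) -> forall m, f m = g m.
Proof.
move=> H m; have [t ->] := unital m.
rewrite (lin_sum (hf_lin f)) (lin_sum (hf_lin g)); apply: eq_bigr => p _.
have := congr1 val (H p.1 (corner p.1 p.2)); rewrite /=.
by [].
Qed.

Section Full.
Variables (M N : RMod K s r) (p : RepHom (repOf M) (repOf N)).

Definition cV := {classic V}.

Definition F (w : V) (m : M) : N := val (p w (corner w m)).

Lemma F_lin w : linear (F w).
Proof.
move=> a x y; rewrite /F (corner_lin w) (@phi_lin _ _ _ _ _ _ _ _ _ p w).
by rewrite linearP.
Qed.

Definition covers (S : seq cV) (m : M) := forall w : cV, w \notin S -> actV M w m = 0.

Lemma covers_sub S1 S2 m : {subset S1 <= S2} -> covers S1 m -> covers S2 m.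
Proof. by move=> sub c w wS; apply: c; apply: contra wS; apply: sub. Qed.

Lemma covers_lin S a x y : covers S x -> covers S y -> covers S (a *: x + y).
Proof. by move=> cx cy w wS; rewrite linearP cx // cy // scaler0 addr0. Qed.

Lemma covers_sum (t : seq (V * M)) :
  covers [seq (q.1 : cV) | q <- t] (\sum_(q <- t) actV M q.1 q.2).
Proof.
move=> w; elim: t => [|q t IH]; first by rewrite big_nil linear0.
rewrite big_cons /= inE negb_or => /andP [wq wt].
rewrite linearD IH // addr0; apply: rel_VV0 => e.
by move: wq; rewrite -e eqxx.
Qed.

Lemma F0 w m : actV M w m = 0 -> F w m = 0.
Proof.
move=> H; rewrite /F.
have -> : corner w m = 0 by apply: val_inj; rewrite /= H.
by rewrite (lin0 (@phi_lin _ _ _ _ _ _ _ _ _ p w)).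
Qed.

Definition G (S : seq cV) (m : M) : N := \sum_(w <- S) F w m.

Lemma G_indep S1 S2 m : uniq S1 -> uniq S2 -> covers S1 m -> covers S2 m ->
  G S1 m = G S2 m.
Proof.
move=> u1 u2 c1 c2.
have e1 : G S1 m = \sum_(w <- S1 ++ [seq w <- S2 | w \notin S1]) F w m.
  rewrite big_cat /= [X in _ + X]big1_seq ?addr0 // => w /andP [_].
  by rewrite mem_filter => /andP [wn _]; apply: F0; apply: c1.
have e2 : G S2 m = \sum_(w <- S2 ++ [seq w <- S1 | w \notin S2]) F w m.
  rewrite big_cat /= [X in _ + X]big1_seq ?addr0 // => w /andP [_].
  by rewrite mem_filter => /andP [wn _]; apply: F0; apply: c2.
rewrite e1 e2; apply: perm_big; apply: uniq_perm.
- by rewrite cat_uniq u1 filter_uniq // andbT; apply/hasPn => w; rewrite mem_filter => /andP [].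
- by rewrite cat_uniq u2 filter_uniq // andbT; apply/hasPn => w; rewrite mem_filter => /andP [].
move=> w; rewrite !mem_cat !mem_filter.
by case: (w \in S1); case: (w \in S2).
Qed.

Definition tm (m : M) : seq (V * M) := proj1_sig (cid (unital m)).
Lemma tmP m : m = \sum_(q <- tm m) actV M q.1 q.2.
Proof. exact: (proj2_sig (cid (unital m))). Qed.

Definition Sm (m : M) : seq cV := undup [seq (q.1 : cV) | q <- tm m].

Lemma Sm_uniq m : uniq (Sm m). Proof. exact: undup_uniq. Qed.
Lemma Sm_covers m : covers (Sm m) m.
Proof.
have := covers_sum (t:=tm m); rewrite -tmP; apply: covers_sub.
by move=> w; rewrite mem_undup.
Qed.

Definition fmap (m : M) : N := G (Sm m) m.

Lemma f_G S m : uniq S -> covers S m -> fmap m = G S m.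
Proof. by move=> u c; apply: G_indep => //; [apply: Sm_uniq | apply: Sm_covers]. Qed.

Lemma G_lin S : linear (G S).
Proof.
move=> a x y; rewrite /G (eq_bigr _ (fun w _ => F_lin w a x y)).
by rewrite big_split /= -scaler_sumr.
Qed.

Lemma fmap_lin : linear fmap.
Proof.
move=> a x y; set S := undup (Sm x ++ Sm y).
have ux : {subset Sm x <= S} by move=> w; rewrite /S mem_undup mem_cat => ->.
have uy : {subset Sm y <= S} by move=> w; rewrite /S mem_undup mem_cat => ->; rewrite orbT.
have cx := covers_sub ux (Sm_covers (m:=x)).
have cy := covers_sub uy (Sm_covers (m:=y)).
rewrite !(@f_G S) ?undup_uniq //; last exact: covers_lin.
exact: G_lin.
Qed.

Lemma f_corner v m : fmap (actV M v m) = F v m.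
Proof.
rewrite (@f_G [:: (v : cV)]) //.
  rewrite /G big_seq1 /F; congr (val (p v _)); apply: val_inj => /=.
  exact: rel_VV.
move=> w; rewrite inE => /eqP wv; apply: rel_VV0 => e; exact: wv.
Qed.

Lemma actV_F u v m : actV N u (F v m) = if (v : cV) == u then F v m else 0.
Proof.
have fx : actV N v (F v m) = F v m by rewrite /F fix_val.
case: eqP => [<- //|ne].
by rewrite -fx rel_VV0.
Qed.

Lemma actV_f v m : actV N v (fmap m) = F v m.
Proof.
rewrite /fmap /G linear_sum.
under eq_bigr => w _ do rewrite actV_F.
case: (boolP ((v : cV) \in Sm m)) => vin.
  rewrite (bigD1_seq (v : cV)) //= ?Sm_uniq // eqxx big1 ?addr0 // => w /negbTE ->.
  by [].
rewrite big1_seq ?F0 //; first by apply: Sm_covers.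
move=> w /andP [_ win]; case: eqP => // e; move: vin; by rewrite -e win.
Qed.

Lemma F_E h (i : I h) (j : J h) m : F (r j) (actE M i j m) = actE N i j (F (s i) m).
Proof.
have := @phi_comm _ _ _ _ _ _ _ _ _ p (mkEdge i j) (corner (s i) m).
move/(congr1 val) => /= <-.
rewrite /F; congr (val (p _ _)); apply: val_inj => /=.
by rewrite rel_Er rel_sE.
Qed.

Lemma F_Es h (i : I h) (j : J h) m : F (s i) (actEs M i j m) = actEs N i j (F (r j) m).
Proof.
pose z i := actEs M i j m.
have key : forall k : J h, \sum_(i : I h) actE N i k (F (s i) (z i)) =
    if j == k then F (r j) m else 0.
  move=> k; rewrite -(eq_bigr _ (fun i _ => F_E i k (z i))).
  rewrite -(lin_sum (F_lin (r k))) /z.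
  rewrite (@rel_CK2 _ _ _ _ _ _ _ M _ j k m).
  case: eqP => [<-|_]; last exact: F0 (linear0 _).
  rewrite /F; congr (val (p _ _)); apply: val_inj => /=; by rewrite !rel_VV.
have -> : actEs N i j (F (r j) m) =
    \sum_(k : J h) actEs N i k (if j == k then F (r j) m else 0).
  rewrite (bigD1 j) //= eqxx big1 ?addr0 // => k /negbTE.
  by rewrite eq_sym => ->; rewrite linear0.
under eq_bigr => k _ do rewrite -key linear_sum.
rewrite exchange_big /=.
rewrite (eq_bigr (fun i0 => if i0 == i then actV N (s i0) (F (s i0) (z i0)) else 0)); last first.
  by move=> k _; rewrite -(@rel_CK1 _ _ _ _ _ _ _ N _ k i).
rewrite (bigD1 i) //= eqxx big1 ?addr0; last by move=> k /negbTE ->.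
by rewrite /F fix_val.
Qed.

Definition fhom : RHom M N.
Proof.
refine {| hf := fmap; hf_lin := fmap_lin |}.
- by move=> v m; rewrite f_corner actV_f.
- move=> h i j m; rewrite -(@rel_Er _ _ _ _ _ _ _ M _ i j m) f_corner F_E.
  by rewrite -(@rel_sE _ _ _ _ _ _ _ N _ i j (fmap m)) actV_f.
- move=> h i j m; rewrite -(@rel_Ess _ _ _ _ _ _ _ M _ i j m) f_corner F_Es.
  by rewrite -(@rel_rEs _ _ _ _ _ _ _ N _ i j (fmap m)) actV_f.
Defined.

Lemma part3 : exists f : RHom M N, forall v x, Fmor f v x = p v x.
Proof.
exists fhom => v x; apply: val_inj => /=.
by rewrite -(fix_val x) f_corner /F cornerK.
Qed.
End Full.
End P2.

Section P1.
Variables (K : fieldType) (V HE : Type) (I J : HE -> finType)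
  (s : forall h, I h -> V) (r : forall h, J h -> V).

Lemma val_fsum (M : lmodType K) (f : {linear M -> M}) (T : Type) (t : seq T) (F : T -> fixsp f) :
  val (\sum_(k <- t) F k) = \sum_(k <- t) val (F k).
Proof. by rewrite raddf_sum. Qed.

Lemma part1 (M : RMod K s r) : condH (repOf M).
Proof.
move=> h.
have gP : forall (y : forall j : J h, fixsp (actV M (r j))) (i : I h),
   (\sum_j actEs M i j (val (y j))) \in fixpred (actV M (s i)).
  by move=> y i; rewrite inE linear_sum; apply/eqP/eq_bigr => j _; rewrite rel_Ess.
pose g : (forall j : J h, fixsp (actV M (r j))) -> forall i : I h, fixsp (actV M (s i)) :=
  fun y i => exist (fun z => z \in fixpred (actV M (s i))) _ (gP y i).
exists g.
- move=> x; apply: functional_extensionality_dep => i; apply: val_inj => /=.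
  rewrite /Hmap.
  under eq_bigr => j _ do rewrite val_fsum linear_sum.
  rewrite exchange_big /=.
  rewrite (eq_bigr (fun k => if k == i then actV M (s k) (val (x k)) else 0)); last first.
    by move=> k _; rewrite -(@rel_CK1 _ _ _ _ _ _ _ M _ k i).
  rewrite (bigD1 i) //= eqxx big1 ?addr0; first exact: fix_val.
  by move=> k /negbTE ->.
- move=> y; apply: functional_extensionality_dep => j; apply: val_inj => /=.
  rewrite /Hmap val_fsum /=.
  under eq_bigr => i _ do rewrite linear_sum.
  rewrite exchange_big /=.
  rewrite (eq_bigr (fun k => if k == j then actV M (r k) (val (y k)) else 0)); last first.
    by move=> k _; rewrite -(@rel_CK2 _ _ _ _ _ _ _ M _ k j).
  rewrite (bigD1 j) //= eqxx big1 ?addr0; first exact: fix_val.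
  by move=> k /negbTE ->.
Qed.
End P1.

Section Single.
Variables (K : fieldType) (T : Type) (P : T -> lmodType K).
Definition single (t : T) (x : P t) : forall t', P t' :=
  fun t' => match pselect (t = t') with left e => eq_rect t P x t' e | right _ => 0 end.
Lemma single_eq t (x : P t) : single x t = x.
Proof.
rewrite /single; case: pselect => [e|]; last by [].
by rewrite (Prop_irrelevance e erefl).
Qed.
Lemma single_neq t t' (x : P t) : t <> t' -> single x t' = 0.
Proof. by rewrite /single; case: pselect. Qed.
Lemma singleP t (a : K) (x y : P t) t' :
  single (a *: x + y) t' = a *: single x t' + single y t'.
Proof.
rewrite /single; case: pselect => [e|_]; last by rewrite scaler0 addr0.
by case: t' / e.
Qed.
Lemma single0 t t' : single (0 : P t) t' = 0.
Proof.
rewrite /single; case: pselect => [e|_] //.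
by case: t' / e.
Qed.
End Single.

Lemma single_sum (K : fieldType) (T : finType) (P : T -> lmodType K)
  (G : forall t, P t) t' : \sum_(t : T) single (G t) t' = G t'.
Proof.
rewrite (bigD1 t') //= single_eq big1 ?addr0 // => t tt.
by apply: single_neq => e; move: tt; rewrite e eqxx.
Qed.

Section P4.
Variables (K : fieldType) (V HE : Type) (I J : HE -> finType)
  (s : forall h, I h -> V) (r : forall h, J h -> V).
Variables (rho : QRep K s r) (Hc : condH rho).

Definition cW := {classic V}.
Definition DF := forall v : V, rc rho v.
HB.instance Definition _ := gen_eqMixin DF.
HB.instance Definition _ := gen_choiceMixin DF.

Definition df0 : DF := fun v => 0.
Definition dfopp (f : DF) : DF := fun v => - f v.
Definition dfadd (f g : DF) : DF := fun v => f v + g v.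
Definition dfscale (a : K) (f : DF) : DF := fun v => a *: f v.

Lemma dfaddA : associative dfadd.
Proof. by move=> f g k; apply: functional_extensionality_dep => v; rewrite /dfadd addrA. Qed.
Lemma dfaddC : commutative dfadd.
Proof. by move=> f g; apply: functional_extensionality_dep => v; rewrite /dfadd addrC. Qed.
Lemma dfadd0 : left_id df0 dfadd.
Proof. by move=> f; apply: functional_extensionality_dep => v; rewrite /dfadd add0r. Qed.
Lemma dfaddN : left_inverse df0 dfopp dfadd.
Proof. by move=> f; apply: functional_extensionality_dep => v; rewrite /dfadd addNr. Qed.
HB.instance Definition _ := GRing.isZmodule.Build DF dfaddA dfaddC dfadd0 dfaddN.

Lemma dfscaleA a b f : dfscale a (dfscale b f) = dfscale (a * b) f.
Proof. by apply: functional_extensionality_dep => v; rewrite /dfscale scalerA. Qed.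
Lemma dfscale1 : left_id 1 dfscale.
Proof. by move=> f; apply: functional_extensionality_dep => v; rewrite /dfscale scale1r. Qed.
Lemma dfscaleDr : right_distributive dfscale +%R.
Proof. by move=> a f g; apply: functional_extensionality_dep => v; rewrite /dfscale /= /dfadd scalerDr. Qed.
Lemma dfscaleDl f : {morph dfscale^~ f : a b / a + b}.
Proof. by move=> a b; apply: functional_extensionality_dep => v; rewrite /dfscale /= /dfadd scalerDl. Qed.
HB.instance Definition _ := GRing.Zmodule_isLmodule.Build K DF dfscaleA dfscale1 dfscaleDr dfscaleDl.

Definition fsupp : {pred DF} :=
  fun f => `[< exists S : seq cW, forall v : cW, v \notin S -> f v = 0 >].

Lemma fsupp_submod : GRing.submod_closed fsupp.
Proof.
split.
  by apply/asboolP; exists [::] => v _.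
move=> a u v /asboolP [Su hu] /asboolP [Sv hv]; apply/asboolP; exists (Su ++ Sv) => w.
rewrite mem_cat negb_or => /andP [wu wv].
by rewrite (_ : (a *: u + v) w = a *: u w + v w) // hu // hv // scaler0 addr0.
Qed.
HB.instance Definition _ := GRing.isSubmodClosed.Build K DF fsupp fsupp_submod.

Definition DS := {f : DF | f \in fsupp}.
HB.instance Definition _ := [isSub for (@sval DF (fun x => x \in fsupp)) : DS -> DF].
HB.instance Definition _ := [Choice of DS by <:].
HB.instance Definition _ := [SubChoice_isSubLmodule of DS by <:].


Lemma valP_pt (a : K) (m n : DS) w : val (a *: m + n) w = a *: val m w + val n w.
Proof. by rewrite linearP. Qed.
Lemma valD_pt (m n : DS) w : val (m + n) w = val m w + val n w.
Proof. by rewrite raddfD. Qed.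
Lemma val0_pt w : val (0 : DS) w = 0.
Proof. by rewrite linear0. Qed.
Lemma val_sum_pt (T : Type) (t : seq T) (F : T -> DS) w :
  val (\sum_(k <- t) F k) w = \sum_(k <- t) val (F k) w.
Proof.
elim: t => [|a t IH]; first by rewrite !big_nil val0_pt.
by rewrite !big_cons valD_pt IH.
Qed.

Lemma single_fsupp v (x : rc rho v) : (single x : DF) \in fsupp.
Proof.
apply/asboolP; exists [:: (v : cW)] => w; rewrite inE => /eqP wv.
by apply: single_neq => e; apply: wv.
Qed.
Definition sg v (x : rc rho v) : DS := exist _ (single x : DF) (single_fsupp x).

Lemma sg_pt v x w : val (@sg v x) w = single x w. Proof. by []. Qed.
Lemma sgP v a (x y : rc rho v) : sg (a *: x + y) = a *: sg x + sg y.
Proof.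
apply: val_inj; apply: functional_extensionality_dep => w.
by rewrite valP_pt !sg_pt singleP.
Qed.
Lemma sg0 v : sg (0 : rc rho v) = 0.
Proof.
apply: val_inj; apply: functional_extensionality_dep => w.
by rewrite val0_pt sg_pt single0.
Qed.
Lemma sgD v (x y : rc rho v) : sg (x + y) = sg x + sg y.
Proof. by have := sgP 1 x y; rewrite !scale1r. Qed.
Lemma sg_sum v (T : Type) (t : seq T) (F : T -> rc rho v) :
  sg (\sum_(k <- t) F k) = \sum_(k <- t) sg (F k).
Proof.
elim: t => [|a t IH]; first by rewrite !big_nil sg0.
by rewrite !big_cons sgD IH.
Qed.

Lemma Hex h : exists g, cancel (Hmap rho h) g /\ cancel g (Hmap rho h).
Proof. by case: (Hc h) => g c1 c2; exists g. Qed.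
Definition Hinv h := proj1_sig (cid (Hex h)).
Lemma HinvK h : cancel (Hmap rho h) (@Hinv h).
Proof. exact: (proj1 (proj2_sig (cid (Hex h)))). Qed.
Lemma HmapK h : cancel (@Hinv h) (Hmap rho h).
Proof. exact: (proj2 (proj2_sig (cid (Hex h)))). Qed.

Lemma rmapP (e : Edge I J) a x y : rmap rho e (a *: x + y) = a *: rmap rho e x + rmap rho e y.
Proof. exact: rmap_lin. Qed.

Lemma Hinv_lin h a (y z : forall j : J h, rc rho (r j)) :
  Hinv (fun j => a *: y j + z j) = (fun i => a *: Hinv y i + Hinv z i).
Proof.
apply: (can_inj (@HinvK h)); rewrite HmapK.
apply: functional_extensionality_dep => j; rewrite /Hmap.
under eq_bigr => i _ do rewrite rmapP.
rewrite big_split /= -scaler_sumr.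
by have := congr1 (fun f => f j) (HmapK y); have := congr1 (fun f => f j) (HmapK z);
  rewrite /Hmap /= => -> ->.
Qed.

Lemma Hinv_sum h (T : Type) (t : seq T) (F : T -> forall j : J h, rc rho (r j)) :
  Hinv (fun j => \sum_(k <- t) F k j) = (fun i => \sum_(k <- t) Hinv (F k) i).
Proof.
apply: (can_inj (@HinvK h)); rewrite HmapK.
apply: functional_extensionality_dep => j; rewrite /Hmap.
symmetry; transitivity (\sum_(i : I h) \sum_(k <- t) (rmap rho (mkEdge i j) (Hinv (F k) i) : rc rho (r j))).
  by apply: eq_bigr => i _; rewrite (lin_sum (@rmap_lin _ _ _ _ _ _ _ rho (mkEdge i j))).
rewrite exchange_big /=; apply: eq_bigr => k _.
by have := congr1 (fun f => f j) (HmapK (F k)); rewrite /Hmap /= => ->.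
Qed.

Definition fV (u : V) (m : DS) : DS := sg (val m u).
Definition fE h (i : I h) (j : J h) (m : DS) : DS :=
  sg (rmap rho (mkEdge i j) (val m (s i)) : rc rho (r j)).
Definition fEs h (i : I h) (j : J h) (m : DS) : DS :=
  sg (Hinv (@single K (J h) (fun j => rc rho (r j)) j (val m (r j))) i).

Lemma fV_lin u : linear (fV u).
Proof. by move=> a m n; rewrite /fV valP_pt sgP. Qed.
Lemma fE_lin h (i : I h) (j : J h) : linear (fE i j).
Proof. by move=> a m n; rewrite /fE valP_pt rmapP sgP. Qed.
Lemma fEs_lin h (i : I h) (j : J h) : linear (fEs i j).
Proof.
move=> a m n; rewrite /fEs valP_pt.
have -> : @single K (J h) (fun j => rc rho (r j)) j (a *: val m (r j) + val n (r j)) =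
   (fun j' => a *: @single K (J h) (fun j => rc rho (r j)) j (val m (r j)) j' +
              @single K (J h) (fun j => rc rho (r j)) j (val n (r j)) j').
  by apply: functional_extensionality_dep => j'; rewrite singleP.
by rewrite Hinv_lin sgP.
Qed.

Lemma fVV u m : fV u (fV u m) = fV u m.
Proof. by rewrite /fV sg_pt single_eq. Qed.
Lemma fVV0 u v m : u <> v -> fV v (fV u m) = 0.
Proof. by move=> ne; rewrite /fV sg_pt single_neq // sg0. Qed.
Lemma fsE h (i : I h) (j : J h) m : fE i j (fV (s i) m) = fE i j m.
Proof. by rewrite /fE /fV sg_pt single_eq. Qed.
Lemma fEr h (i : I h) (j : J h) m : fV (r j) (fE i j m) = fE i j m.
Proof. by rewrite /fE /fV sg_pt single_eq. Qed.
Lemma frEs h (i : I h) (j : J h) m : fEs i j (fV (r j) m) = fEs i j m.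
Proof. by rewrite /fEs /fV sg_pt single_eq. Qed.
Lemma fEss h (i : I h) (j : J h) m : fV (s i) (fEs i j m) = fEs i j m.
Proof. by rewrite /fEs /fV sg_pt single_eq. Qed.

Lemma fCK1 h (i k : I h) m :
  \sum_(j : J h) fEs k j (fE i j m) = if i == k then fV (s i) m else 0.
Proof.
rewrite /fEs /fE.
under eq_bigr => j _ do rewrite sg_pt single_eq.
rewrite -sg_sum.
set x := val m (s i).
have -> : \sum_(j : J h) Hinv (@single K (J h) (fun j => rc rho (r j)) j
     (rmap rho (mkEdge i j) x : rc rho (r j))) k =
   Hinv (fun j' : J h => \sum_(j : J h) @single K (J h) (fun j => rc rho (r j)) j
     (rmap rho (mkEdge i j) x : rc rho (r j)) j') k.
  by rewrite Hinv_sum.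
have -> : (fun j' : J h => \sum_(j : J h) @single K (J h) (fun j => rc rho (r j)) j
     (rmap rho (mkEdge i j) x : rc rho (r j)) j') =
   Hmap rho h (@single K (I h) (fun i => rc rho (s i)) i x).
  apply: functional_extensionality_dep => j'.
  rewrite (single_sum (fun j => rmap rho (mkEdge i j) x : rc rho (r j))) /Hmap.
  rewrite (bigD1 i) //= single_eq big1 ?addr0 // => i' ii.
  rewrite single_neq ?(lin0 (@rmap_lin _ _ _ _ _ _ _ rho (mkEdge i' j'))) //.
  by move=> e; move: ii; rewrite e eqxx.
rewrite HinvK /fV; case: eqP => [<-|ne]; first by rewrite single_eq.
by rewrite single_neq // sg0.
Qed.

Lemma fCK2 h (j k : J h) m :
  \sum_(i : I h) fE i k (fEs i j m) = if j == k then fV (r j) m else 0.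
Proof.
rewrite /fE /fEs.
under eq_bigr => i _ do rewrite sg_pt single_eq.
rewrite -sg_sum.
set y := @single K (J h) (fun j => rc rho (r j)) j (val m (r j)).
have -> : \sum_(i : I h) (rmap rho (mkEdge i k) (Hinv y i) : rc rho (r k)) = Hmap rho h (Hinv y) k by [].
rewrite HmapK /y /fV; case: eqP => [<-|ne]; first by rewrite single_eq.
by rewrite single_neq // sg0.
Qed.

Lemma fUnital (m : DS) : exists t : seq (V * DS), m = \sum_(q <- t) fV q.1 q.2.
Proof.
move: (valP m) => /asboolP [S hS].
exists [seq ((w : V), m) | w <- undup S].
apply: val_inj; apply: functional_extensionality_dep => v.
rewrite val_sum_pt big_map /fV.
under eq_bigr => w _ do rewrite sg_pt.
case: (boolP ((v : cW) \in undup S)) => vin.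
  rewrite (bigD1_seq (v : cW)) ?undup_uniq //= single_eq big1 ?addr0 //.
  by move=> w wv; apply: single_neq => e; move: wv; rewrite e eqxx.
rewrite /= (@big1_seq _ _ _ (classicType V)); first by apply: hS; rewrite -mem_undup.
move=> w /andP [_ win]; apply: single_neq => e; move: vin; by rewrite -e win.
Qed.

Definition mkLin (f : DS -> DS) (fl : linear f) : {linear DS -> DS} :=
  HB.pack f (GRing.isLinear.Build K DS DS *:%R f fl).

Definition Mdl : RMod K s r :=
  @Build_RMod K V HE I J s r DS (fun u => mkLin (fV_lin u))
    (fun h i j => mkLin (@fE_lin h i j)) (fun h i j => mkLin (@fEs_lin h i j))
    (fun u m => fVV u m) (fun u v m => @fVV0 u v m)
    (fun h i j m => @fsE h i j m) (fun h i j m => @fEr h i j m)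
    (fun h i j m => @frEs h i j m) (fun h i j m => @fEss h i j m)
    (fun h i k m => @fCK1 h i k m) (fun h j k m => @fCK2 h j k m)
    fUnital.

Definition pmap v (x : fixsp (actV Mdl v)) : rc rho v := val (val x) v.
Lemma pmap_lin v : linear (@pmap v).
Proof.
move=> a x y; rewrite /pmap.
have -> : val (a *: x + y) = a *: val x + val y by rewrite linearP.
by rewrite valP_pt.
Qed.
Lemma pmap_comm (e : Edge I J) (x : rc (repOf Mdl) (src s e)) :
  pmap (rmap (repOf Mdl) e x) = rmap rho e (pmap x).
Proof. by case: e x => h i j x; rewrite /pmap /= single_eq. Qed.

Definition pHom : RepHom (repOf Mdl) rho :=
  @Build_RepHom K V HE I J s r (repOf Mdl) rho pmap pmap_lin pmap_comm.

Lemma pHom_bij v : bijective (pHom v).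
Proof.
have gP : forall y : rc rho v, sg y \in fixpred (actV Mdl v).
  by move=> y; rewrite inE; apply/eqP; change (fV v (sg y) = sg y); rewrite /fV sg_pt single_eq.
exists (fun y => exist (fun z => z \in fixpred (actV Mdl v)) (sg y) (gP y)).
  move=> x; apply: val_inj => /=; exact: (fix_val x).
by move=> y; rewrite /= /pmap /= single_eq.
Qed.

Lemma part4 : exists (M : RMod K s r) (p : RepHom (repOf M) rho), forall v, bijective (p v).
Proof. by exists Mdl, pHom; exact: pHom_bij. Qed.
End P4.

Theorem mainTheorem13 (K : fieldType) (V HE : Type) (I J : HE -> finType)
  (s : forall h, I h -> V) (r : forall h, J h -> V)
  (HI : forall h, (0 < #|I h|)%N) (HJ : forall h, (0 < #|J h|)%N) :
  (forall M : RMod K s r, condH (repOf M)) /\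
  (forall (M N : RMod K s r) (f g : RHom M N),
     (forall v x, Fmor f v x = Fmor g v x) -> forall m, f m = g m) /\
  (forall (M N : RMod K s r) (p : RepHom (repOf M) (repOf N)),
     exists f : RHom M N, forall v x, Fmor f v x = p v x) /\
  (forall rho : QRep K s r, condH rho ->
     exists (M : RMod K s r) (p : RepHom (repOf M) rho),
       forall v, bijective (p v)).
Proof.
split; first by move=> M; exact: part1.
split; first by move=> M N f g; exact: part2.
split; first by move=> M N p; exact: part3.
by move=> rho Hc; exact: part4.
Qed.
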